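(* Let $E,r,\sigma>0$, $\gamma=\frac{2r}{\sigma^2}$, and write $f_2^*(\zeta;\gamma)$ for $f_2^*(\zeta)$ to indicate dependence on $\gamma$. Let $\gamma_0=\min\{\gamma>0 : \max_{\zeta>0}f_2^*(\zeta;\gamma)\le\pi\}$ (numerically $\gamma_0\approx0.0167821$). If $\gamma\ge\gamma_0$, then $f_2^*(\zeta;\gamma)\in[0,\pi]$ for every $\zeta>0$, and consequently $\frac{d^2}{d\tau^2}\varrho^{Zhu}(\tau)>0$ for all $\tau>0$; that is, $\tau\mapsto\varrho^{Zhu}(\tau)$ is convex.
   Context: Set $a=\frac{1+\gamma}{2}$, $b=\frac{1-\gamma}{2}$, and for $\zeta>0$ \[ f_1^*(\zeta)=\frac{1}{b^2+\zeta^2}\Big[b\ln\Big(\tfrac{1}{\gamma}\sqrt{a^2+\zeta^2}\Big)+\zeta\arctan(\zeta/a)\Big],\quad f_2^*(\zeta)=\frac{1}{b^2+\zeta^2}\Big[\zeta\ln\Big(\tfrac{1}{\gamma}\sqrt{a^2+\zeta^2}\Big)-b\arctan(\zeta/a)\Big]. \] Zhu's approximation of the early exercise boundary of the American put (as a function of time to maturity $\tau>0$) is \[ \varrho^{Zhu}(\tau)=\frac{\gamma E}{1+\gamma}+\frac{2E}{\pi}\int_0^\infty\frac{\zeta\,e^{-\tau\frac{\sigma^2}{2}(a^2+\zeta^2)}}{a^2+\zeta^2}\,e^{-f_1^*(\zeta)}\sin\big(f_2^*(\zeta)\big)\,d\zeta. \] *)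

(* Defs.v *)
From Stdlib Require Import Reals.
Open Scope R_scope.

Definition za (g : R) : R := (1 + g) / 2.
Definition zb (g : R) : R := (1 - g) / 2.

Definition f1star (g z : R) : R :=
  / (zb g ^ 2 + z ^ 2) *
  (zb g * ln (/ g * sqrt (za g ^ 2 + z ^ 2)) + z * atan (z / za g)).

Definition f2star (g z : R) : R :=
  / (zb g ^ 2 + z ^ 2) *
  (z * ln (/ g * sqrt (za g ^ 2 + z ^ 2)) - zb g * atan (z / za g)).

Definition improper_integral_0_inf (f : R -> R) (l : R) : Prop :=
  (forall T, 0 <= T -> exists _ : Riemann_integrable f 0 T, True) /\
  (forall eps, 0 < eps -> exists M, forall T (pr : Riemann_integrable f 0 T),
      M <= T -> Rabs (RiemannInt pr - l) < eps).

Definition zhu_integrand (sigma g tau z : R) : R :=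
  z * exp (- (tau * (sigma ^ 2 / 2) * (za g ^ 2 + z ^ 2))) / (za g ^ 2 + z ^ 2)
  * exp (- f1star g z) * sin (f2star g z).

(* rho is Zhu's early exercise boundary on tau > 0. *)
Definition is_rho_zhu (E sigma g : R) (rho : R -> R) : Prop :=
  forall tau, 0 < tau -> exists L,
    improper_integral_0_inf (zhu_integrand sigma g tau) L /\
    rho tau = g * E / (1 + g) + 2 * E / PI * L.

Definition is_gamma0 (g0 : R) : Prop :=
  0 < g0 /\ (forall z, 0 < z -> f2star g0 z <= PI) /\
  (forall g, 0 < g -> (forall z, 0 < z -> f2star g z <= PI) -> g0 <= g).

(* Main.v *)
Require Import Defs.
From Stdlib Require Import Reals Lra Lia Psatz ClassicalEpsilon FunctionalExtensionality.
Open Scope R_scope.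

Lemma dl_ext f g x l l' : (forall y, f y = g y) -> l = l' ->
  derivable_pt_lim f x l -> derivable_pt_lim g x l'.
Proof. intros H <- D. intros e he. destruct (D e he) as [d Hd]. exists d.
  intros h h0 hd. rewrite <- !H. apply Hd; auto. Qed.

Lemma dl_plus f g x l1 l2 : derivable_pt_lim f x l1 -> derivable_pt_lim g x l2 ->
  derivable_pt_lim (fun y => f y + g y) x (l1 + l2).
Proof. intros; apply (derivable_pt_lim_plus f g); auto. Qed.
Lemma dl_minus f g x l1 l2 : derivable_pt_lim f x l1 -> derivable_pt_lim g x l2 ->
  derivable_pt_lim (fun y => f y - g y) x (l1 - l2).
Proof. intros; apply (derivable_pt_lim_minus f g); auto. Qed.
Lemma dl_mult f g x l1 l2 : derivable_pt_lim f x l1 -> derivable_pt_lim g x l2 ->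
  derivable_pt_lim (fun y => f y * g y) x (l1 * g x + f x * l2).
Proof. intros; apply (derivable_pt_lim_mult f g); auto. Qed.
Lemma dl_comp f g x l1 l2 : derivable_pt_lim f x l1 -> derivable_pt_lim g (f x) l2 ->
  derivable_pt_lim (fun y => g (f y)) x (l2 * l1).
Proof. intros; apply (derivable_pt_lim_comp f g); auto. Qed.
Lemma dl_const a x : derivable_pt_lim (fun _ => a) x 0.
Proof. apply derivable_pt_lim_const. Qed.
Lemma dl_id x : derivable_pt_lim (fun y => y) x 1.
Proof. apply derivable_pt_lim_id. Qed.

Lemma cont_dl f x l : derivable_pt_lim f x l -> continuity_pt f x.
Proof. intro D. apply derivable_continuous_pt. exists l. exact D. Qed.

Lemma ftc (f F : R -> R) a b (pr : Riemann_integrable f a b) :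
  a <= b -> (forall x, a <= x <= b -> continuity_pt f x) ->
  (forall x, a <= x <= b -> derivable_pt_lim F x (f x)) ->
  RiemannInt pr = F b - F a.
Proof.
  intros H H0 HF.
  rewrite (RiemannInt_P20 H (FTC_P1 H H0) pr).
  assert (H1 := RiemannInt_P29 H H0).
  assert (H2 : antiderivative f F a b).
  { split; [|exact H]. intros x Hx. exists (exist _ (f x) (HF x Hx)). reflexivity. }
  destruct (antiderivative_Ucte f _ _ _ _ H1 H2) as [C H3].
  rewrite (H3 b), (H3 a); [ring| lra| lra].
Qed.

Lemma cauchy_limit (I : R -> R) :
  (forall eps, 0 < eps -> exists M, forall S T, M <= S -> M <= T -> Rabs (I T - I S) < eps) ->
  exists L, forall eps, 0 < eps -> exists M, forall T, M <= T -> Rabs (I T - L) < eps.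
Proof.
  intros HC.
  assert (Hc : Cauchy_crit (fun n => I (INR n))).
  { intros e he. destruct (HC e he) as [M HM]. destruct (INR_unbounded M) as [N HN].
    exists N. intros n m Hn Hm. unfold Rdist.
    apply HM; apply Rle_trans with (INR N); try lra; apply le_INR; lia. }
  destruct (R_complete _ Hc) as [l Hl]. exists l.
  intros e he. destruct (HC (e/2) ltac:(lra)) as [M HM].
  destruct (Hl (e/2) ltac:(lra)) as [N1 HN1].
  destruct (INR_unbounded (Rmax M (INR N1))) as [n Hn].
  exists M. intros T HT.
  assert (Hn1 : (n >= N1)%nat).
  { destruct (Compare_dec.le_lt_dec N1 n) as [|Hlt]; [lia|].
    apply lt_INR in Hlt. pose proof (Rmax_r M (INR N1)). lra. }
  specialize (HN1 n Hn1). unfold Rdist in HN1.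
  assert (HMn : M <= INR n) by (pose proof (Rmax_l M (INR N1)); lra).
  specialize (HM (INR n) T HMn HT).
  replace (I T - l) with ((I T - I (INR n)) + (I (INR n) - l)) by ring.
  eapply Rle_lt_trans; [apply Rabs_triang|]. lra.
Qed.


Lemma exp_m1_bound v : Rabs (exp v - 1) <= Rabs v * exp (Rabs v).
Proof.
  destruct (Rtotal_order v 0) as [Hv|[Hv|Hv]].
  - destruct (MVT_cor2 exp exp v 0 Hv (fun c _ => derivable_pt_lim_exp c)) as [c [Hc Hc2]].
    rewrite exp_0 in Hc. replace (exp v - 1) with (- (exp c * (0 - v))) by lra.
    rewrite Rabs_Ropp, Rabs_mult, (Rabs_right (exp c)) by (left; apply exp_pos).
    rewrite Rabs_left with v by lra. rewrite Rabs_right by lra.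
    replace (0 - v) with (-v) by ring. rewrite Rmult_comm.
    apply Rmult_le_compat_l; [lra|]. left. apply exp_increasing. lra.
  - subst. rewrite exp_0, Rabs_R0. replace (1-1) with 0 by ring. rewrite Rabs_R0. lra.
  - destruct (MVT_cor2 exp exp 0 v Hv (fun c _ => derivable_pt_lim_exp c)) as [c [Hc Hc2]].
    rewrite exp_0 in Hc. rewrite Hc.
    rewrite Rabs_mult, (Rabs_right (exp c)) by (left; apply exp_pos).
    rewrite (Rabs_right v) by lra. replace (v - 0) with v by ring. rewrite Rabs_right by lra.
    rewrite Rmult_comm.
    apply Rmult_le_compat_l; [lra|]. left. apply exp_increasing. lra.
Qed.

Lemma exp_taylor u : Rabs (exp u - 1 - u) <= u^2 * exp (Rabs u).
Proof.
  set (g := fun v => exp v - 1 - v).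
  assert (Hd : forall c, derivable_pt_lim g c (exp c - 1)).
  { intro c. unfold g. apply (dl_ext (fun v => exp v - 1 - v) _ _ ((exp c - 0) - 1)); [intro; reflexivity|ring|].
    apply dl_minus; [|apply dl_id].
    apply dl_minus; [apply derivable_pt_lim_exp|apply dl_const]. }
  assert (Hg0 : g 0 = 0) by (unfold g; rewrite exp_0; ring).
  assert (key : forall c, Rabs c <= Rabs u -> Rabs (exp c - 1) <= Rabs u * exp (Rabs u)).
  { intros c Hc. eapply Rle_trans; [apply exp_m1_bound|].
    apply Rmult_le_compat; try lra; [apply Rabs_pos| left; apply exp_pos|].
    destruct Hc as [Hc|Hc]; [left; apply exp_increasing; lra| rewrite Hc; lra]. }
  change (Rabs (g u) <= u ^ 2 * exp (Rabs u)).
  destruct (Rtotal_order u 0) as [Hu|[Hu|Hu]].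
  - destruct (MVT_cor2 g (fun c => exp c - 1) u 0 Hu (fun c _ => Hd c)) as [c [Hc Hc2]].
    replace (g u) with (- ((exp c - 1) * (0 - u))) by lra.
    rewrite Rabs_Ropp, Rabs_mult.
    replace (u^2) with (Rabs u * Rabs (0 - u)).
    2:{ rewrite Rabs_left by lra. rewrite Rabs_right by lra. ring. }
    apply Rle_trans with (Rabs u * exp (Rabs u) * Rabs (0-u));
      [apply Rmult_le_compat_r; [apply Rabs_pos|apply key] | right; ring].
    rewrite !Rabs_left by lra. lra.
  - subst. rewrite Hg0, Rabs_R0. pose proof (exp_pos (Rabs 0)). nra.
  - destruct (MVT_cor2 g (fun c => exp c - 1) 0 u Hu (fun c _ => Hd c)) as [c [Hc Hc2]].
    replace (g u) with ((exp c - 1) * (u - 0)) by lra.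
    rewrite Rabs_mult.
    replace (u^2) with (Rabs u * Rabs (u - 0)).
    2:{ rewrite !Rabs_right by lra. ring. }
    apply Rle_trans with (Rabs u * exp (Rabs u) * Rabs (u-0));
      [apply Rmult_le_compat_r; [apply Rabs_pos|apply key] | right; ring].
    rewrite !Rabs_right by lra. lra.
Qed.


Definition cont_all (f : R -> R) := forall x, continuity_pt f x.

Lemma cont_mult f g x : continuity_pt f x -> continuity_pt g x -> continuity_pt (fun y => f y * g y) x.
Proof. intros; apply (continuity_pt_mult f g); auto. Qed.
Lemma cont_plus f g x : continuity_pt f x -> continuity_pt g x -> continuity_pt (fun y => f y + g y) x.
Proof. intros; apply (continuity_pt_plus f g); auto. Qed.
Lemma cont_minus f g x : continuity_pt f x -> continuity_pt g x -> continuity_pt (fun y => f y - g y) x.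
Proof. intros; apply (continuity_pt_minus f g); auto. Qed.
Lemma cont_const a x : continuity_pt (fun _ => a) x.
Proof. apply continuity_pt_const. intros y z; reflexivity. Qed.
Lemma cont_id x : continuity_pt (fun y => y) x.
Proof. apply (cont_dl _ _ _ (dl_id x)). Qed.
Lemma cont_comp f g x : continuity_pt f x -> continuity_pt g (f x) -> continuity_pt (fun y => g (f y)) x.
Proof. intros; apply (continuity_pt_comp f g); auto. Qed.
Lemma cont_abs f x : continuity_pt f x -> continuity_pt (fun y => Rabs (f y)) x.
Proof. intro H. apply cont_comp; auto. apply Rcontinuity_abs. Qed.
Lemma cont_ext f g x : (forall y, f y = g y) -> continuity_pt f x -> continuity_pt g x.
Proof. intros H. replace g with f; auto. apply functional_extensionality; auto. Qed.

Definition ri (f : R -> R) (Hc : cont_all f) (a b : R) : Riemann_integrable f a b.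
Proof.
  destruct (Rle_dec a b) as [H|H].
  - apply continuity_implies_RiemannInt; auto.
  - apply RiemannInt_P1. apply continuity_implies_RiemannInt; [lra|auto].
Defined.

Lemma dl_gauss mu A x : derivable_pt_lim (fun z => exp (- (mu * (A + z^2)))) x
   (exp (- (mu * (A + x^2))) * (- (mu * (2 * x)))).
Proof.
  apply (dl_comp (fun z => - (mu * (A + z^2))) exp).
  - apply (dl_ext (fun z => - (mu * (A + z^2))) _ _ (-(0 * (A + x^2) + mu * (0 + INR 2 * x ^ Nat.pred 2))));
      [intro; reflexivity| simpl; ring|].
    apply (derivable_pt_lim_opp (fun z => mu * (A + z^2))).
    apply (dl_mult (fun _ => mu) (fun z => A + z^2)); [apply dl_const|].
    apply (dl_plus (fun _ => A) (fun z => z^2)); [apply dl_const|].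
    apply derivable_pt_lim_pow.
  - apply derivable_pt_lim_exp.
Qed.

Lemma cont_gauss mu A : cont_all (fun z => exp (- (mu * (A + z^2)))).
Proof. intro x. exact (cont_dl _ _ _ (dl_gauss mu A x)). Qed.

Lemma tail_bound (p : R -> R) K mu A : 0 < mu -> 0 <= K -> cont_all p ->
  (forall z, 0 <= z -> Rabs (p z) <= K * z * exp (- (mu * (A + z^2)))) ->
  forall S T (pr : Riemann_integrable p S T), 0 <= S <= T ->
  Rabs (RiemannInt pr) <= K * exp (- (mu*(A+S^2))) / (2*mu).
Proof.
  intros Hmu HK Hc Hb S T pr HST.
  set (g := fun z => K * z * exp (- (mu * (A + z^2)))).
  set (F := fun z => - (K * exp (- (mu * (A + z^2)))) / (2*mu)).
  assert (Hgc : cont_all g).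
  { intro x. unfold g. apply cont_mult; [apply cont_mult; [apply cont_const|apply cont_id]|apply cont_gauss]. }
  assert (HF : forall x, derivable_pt_lim F x (g x)).
  { intro x. unfold F, g.
    apply (dl_ext (fun z => - (K * exp (- (mu * (A + z^2)))) * / (2*mu)) _ _
       (- (0 * exp (- (mu * (A + x^2))) + K * (exp (- (mu * (A + x^2))) * (- (mu * (2 * x))))) * / (2*mu)));
      [intro; reflexivity| field; lra|].
    apply (derivable_pt_lim_scal_right (fun z => - (K * exp (- (mu * (A + z^2)))))).
    apply (derivable_pt_lim_opp (fun z => (K * exp (- (mu * (A + z^2)))))).
    apply (dl_mult (fun _ => K) (fun z => exp (- (mu * (A + z^2))))); [apply dl_const|apply dl_gauss]. }
  assert (Hpa : cont_all (fun z => Rabs (p z))) by (intro x; apply cont_abs; auto).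
  pose (pra := ri _ Hpa S T). pose (prg := ri _ Hgc S T).
  apply Rle_trans with (RiemannInt pra). { apply RiemannInt_P17; lra. }
  apply Rle_trans with (RiemannInt prg).
  { apply RiemannInt_P19; [lra|]. intros x Hx; apply Hb; lra. }
  rewrite (ftc g F S T prg) by (try lra; intros; auto).
  unfold F. pose proof (exp_pos (- (mu * (A + T^2)))).
  apply Rle_trans with (0 - - (K * exp (- (mu * (A + S ^ 2)))) / (2 * mu)).
  - unfold Rminus. apply Rplus_le_compat_r. unfold Rdiv.
    rewrite <- Ropp_mult_distr_l. apply Rge_le, Ropp_0_le_ge_contravar.
    apply Rmult_le_pos; [nra| left; apply Rinv_0_lt_compat; lra].
  - right. field. lra.
Qed.


Lemma exp_neg_inv_bound x : 0 < x -> exp (- x) <= / x.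
Proof.
  intro Hx. rewrite exp_Ropp. apply Rinv_le_contravar; [lra|].
  pose proof (exp_ineq1_le x). lra.
Qed.

Lemma imp_exists p K mu A : 0 < mu -> 0 <= K -> 0 <= A -> cont_all p ->
  (forall z, 0 <= z -> Rabs (p z) <= K * z * exp (- (mu * (A + z^2)))) ->
  exists L, improper_integral_0_inf p L.
Proof.
  intros Hmu HK HA Hc Hb.
  set (I := fun T => RiemannInt (ri p Hc 0 T)).
  assert (Hcs : forall S T, 0 <= S <= T -> Rabs (I T - I S) <= K * exp (- (mu*(A+S^2))) / (2*mu)).
  { intros S T HST. unfold I. rewrite <- (RiemannInt_P26 (ri p Hc 0 S) (ri p Hc S T) (ri p Hc 0 T)).
    replace (_ + _ - _) with (RiemannInt (ri p Hc S T)) by ring. apply tail_bound; auto. }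
  assert (Hexp : forall S, 1 <= S -> K * exp (- (mu*(A+S^2))) / (2*mu) <= K / (2*mu*mu*S)).
  { intros S HS.
    assert (H1 : exp (- (mu*(A+S^2))) <= / (mu * S)).
    { assert (S <= S^2) by nra. assert (0 < A + S^2) by nra.
      eapply Rle_trans; [apply exp_neg_inv_bound; nra|].
      apply Rinv_le_contravar; [nra|]. apply Rmult_le_compat_l; lra. }
    unfold Rdiv. replace (K * / (2 * mu * mu * S)) with (K * / (mu * S) * / (2*mu)) by (field; nra).
    apply Rmult_le_compat_r; [left; apply Rinv_0_lt_compat; lra|].
    apply Rmult_le_compat_l; auto. }
  assert (HC : forall eps, 0 < eps -> exists M, forall S T, M <= S -> M <= T -> Rabs (I T - I S) < eps).
  { intros eps He. exists (Rmax 1 (K / (2*mu*mu*eps) + 1)).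
    assert (key : forall S T, Rmax 1 (K / (2*mu*mu*eps) + 1) <= S -> S <= T -> Rabs (I T - I S) < eps).
    { intros S T HS HST.
      pose proof (Rmax_l 1 (K / (2*mu*mu*eps) + 1)). pose proof (Rmax_r 1 (K / (2*mu*mu*eps) + 1)).
      eapply Rle_lt_trans; [apply Hcs; lra|].
      eapply Rle_lt_trans; [apply Hexp; lra|].
      apply (Rmult_lt_reg_r (2*mu*mu*S)); [nra|].
      unfold Rdiv. rewrite Rmult_assoc, Rinv_l by nra.
      assert (K / (2*mu*mu*eps) * (2*mu*mu*eps) = K) by (field; nra).
      assert (K / (2*mu*mu*eps) < S) by lra.
      assert (0 < 2*mu*mu*eps) by (apply Rmult_lt_0_compat; [nra|lra]).
      assert (K / (2*mu*mu*eps) * (2*mu*mu*eps) < S * (2*mu*mu*eps)) by (apply Rmult_lt_compat_r; lra).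
      nra. }
    intros S T HS HT. destruct (Rle_dec S T).
    - apply key; auto.
    - rewrite Rabs_minus_sym. apply key; lra. }
  destruct (cauchy_limit I HC) as [L HL]. exists L. split.
  - intros T HT. exists (ri p Hc 0 T). exact Logic.I.
  - intros eps He. destruct (HL eps He) as [M HM]. exists M. intros T pr HT.
    rewrite (RiemannInt_P5 pr (ri p Hc 0 T)). apply HM; auto.
Qed.

Lemma imp_get f L T : improper_integral_0_inf f L -> 0 <= T -> exists _ : Riemann_integrable f 0 T, True.
Proof. intros [H _] HT. apply H; auto. Qed.

Lemma imp_unique f L1 L2 : improper_integral_0_inf f L1 -> improper_integral_0_inf f L2 -> L1 = L2.
Proof.
  intros H1 H2. destruct (Req_dec L1 L2) as [|Hne]; auto. exfalso.
  set (e := Rabs (L1 - L2) / 2).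
  assert (He : 0 < e) by (unfold e; pose proof (Rabs_pos_lt (L1 - L2)); assert (L1 - L2 <> 0) by lra; specialize (H H0); lra).
  destruct (proj2 H1 e He) as [M1 HM1]. destruct (proj2 H2 e He) as [M2 HM2].
  set (T := Rmax 0 (Rmax M1 M2)).
  assert (HT0 : 0 <= T) by apply Rmax_l.
  destruct (imp_get f L1 T H1 HT0) as [pr _].
  assert (A1 := HM1 T pr ltac:(unfold T; pose proof (Rmax_r 0 (Rmax M1 M2)); pose proof (Rmax_l M1 M2); lra)).
  assert (A2 := HM2 T pr ltac:(unfold T; pose proof (Rmax_r 0 (Rmax M1 M2)); pose proof (Rmax_r M1 M2); lra)).
  assert (Rabs (L1 - L2) <= Rabs (RiemannInt pr - L2) + Rabs (RiemannInt pr - L1)).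
  { replace (L1 - L2) with ((RiemannInt pr - L2) - (RiemannInt pr - L1)) by ring.
    eapply Rle_trans; [apply Rabs_triang|]. rewrite Rabs_Ropp. lra. }
  unfold e in *. lra.
Qed.

Lemma imp_lin f g Lf Lg l : improper_integral_0_inf f Lf -> improper_integral_0_inf g Lg ->
  improper_integral_0_inf (fun x => f x + l * g x) (Lf + l * Lg).
Proof.
  intros Hf Hg. split.
  - intros T HT. destruct (imp_get f Lf T Hf HT) as [p1 _]. destruct (imp_get g Lg T Hg HT) as [p2 _].
    exists (RiemannInt_P10 l p1 p2). exact I.
  - intros eps He.
    set (e := eps / (2 * (Rabs l + 1))).
    assert (He' : 0 < e) by (unfold e; pose proof (Rabs_pos l); apply Rdiv_lt_0_compat; lra).
    destruct (proj2 Hf e He') as [M1 HM1]. destruct (proj2 Hg e He') as [M2 HM2].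
    exists (Rmax 0 (Rmax M1 M2)). intros T pr HT.
    pose proof (Rmax_r 0 (Rmax M1 M2)); pose proof (Rmax_l M1 M2); pose proof (Rmax_r M1 M2).
    pose proof (Rmax_l 0 (Rmax M1 M2)).
    destruct (imp_get f Lf T Hf ltac:(lra)) as [p1 _]. destruct (imp_get g Lg T Hg ltac:(lra)) as [p2 _].
    rewrite (RiemannInt_P13 p1 p2 pr).
    specialize (HM1 T p1 ltac:(lra)). specialize (HM2 T p2 ltac:(lra)).
    replace (RiemannInt p1 + l * RiemannInt p2 - (Lf + l * Lg)) with
      ((RiemannInt p1 - Lf) + l * (RiemannInt p2 - Lg)) by ring.
    eapply Rle_lt_trans; [apply Rabs_triang|]. rewrite Rabs_mult.
    assert (Rabs l * Rabs (RiemannInt p2 - Lg) <= Rabs l * e) by (apply Rmult_le_compat_l; [apply Rabs_pos|lra]).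
    assert (e + Rabs l * e < eps).
    { unfold e. pose proof (Rabs_pos l).
      replace (eps / (2 * (Rabs l + 1)) + Rabs l * (eps / (2 * (Rabs l + 1)))) with (eps / 2) by (field; lra).
      lra. }
    lra.
Qed.

Lemma imp_abs_le f L K : improper_integral_0_inf f L ->
  (forall T (pr : Riemann_integrable f 0 T), 0 <= T -> Rabs (RiemannInt pr) <= K) -> Rabs L <= K.
Proof.
  intros Hf HK. destruct (Rle_dec (Rabs L) K) as [|Hn]; auto. exfalso.
  destruct (proj2 Hf (Rabs L - K) ltac:(lra)) as [M HM].
  set (T := Rmax 0 M). pose proof (Rmax_l 0 M). pose proof (Rmax_r 0 M).
  destruct (imp_get f L T Hf ltac:(unfold T; lra)) as [pr _].
  specialize (HM T pr ltac:(unfold T; lra)). specialize (HK T pr ltac:(unfold T; lra)).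
  assert (Rabs L <= Rabs (RiemannInt pr) + Rabs (RiemannInt pr - L)).
  { replace L with (RiemannInt pr - (RiemannInt pr - L)) at 1 by ring.
    eapply Rle_trans; [apply Rabs_triang|]. rewrite Rabs_Ropp. lra. }
  lra.
Qed.

Lemma imp_ge f L m T0 : improper_integral_0_inf f L ->
  (forall T (pr : Riemann_integrable f 0 T), T0 <= T -> m <= RiemannInt pr) -> m <= L.
Proof.
  intros Hf Hm. destruct (Rle_dec m L) as [|Hn]; auto. exfalso.
  destruct (proj2 Hf (m - L) ltac:(lra)) as [M HM].
  set (T := Rmax 0 (Rmax M T0)). pose proof (Rmax_l 0 (Rmax M T0)). pose proof (Rmax_r 0 (Rmax M T0)).
  pose proof (Rmax_l M T0). pose proof (Rmax_r M T0).
  destruct (imp_get f L T Hf ltac:(unfold T; lra)) as [pr _].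
  specialize (HM T pr ltac:(unfold T; lra)). specialize (Hm T pr ltac:(unfold T; lra)).
  apply Rabs_def2 in HM. lra.
Qed.

Lemma imp_ext f g L : (forall x, f x = g x) -> improper_integral_0_inf f L -> improper_integral_0_inf g L.
Proof. intros H. replace g with f; auto. apply functional_extensionality; auto. Qed.


Definition Pint (A c : R) (q : R -> R) (tau z : R) := q z * exp (- (tau * c * (A + z^2))).
Definition Dom (A : R) (q : R -> R) := cont_all q /\
  (forall nu, 0 < nu -> exists B, 0 <= B /\
     forall z, 0 <= z -> Rabs (q z) <= B * z * exp (nu * (A + z^2))).
Definition qw (A c : R) (q : R -> R) (z : R) := q z * (- (c * (A + z^2))).
Definition Ival (A c : R) (q : R -> R) (tau : R) : R :=
  epsilon (inhabits 0) (fun L => improper_integral_0_inf (Pint A c q tau) L).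

Lemma Pint_cont A c q tau : cont_all q -> cont_all (Pint A c q tau).
Proof. intros Hq x. unfold Pint. apply cont_mult; auto. apply (cont_gauss (tau*c) A). Qed.

Lemma Pint_bound A c q tau : 0 < c -> 0 < tau -> Dom A q -> exists K, 0 <= K /\
  forall z, 0 <= z -> Rabs (Pint A c q tau z) <= K * z * exp (- ((tau*c/2) * (A + z^2))).
Proof.
  intros Hc Ht [Hq Hb]. destruct (Hb (tau*c/2) ltac:(nra)) as [B [HB HBz]].
  exists B. split; auto. intros z Hz. unfold Pint.
  rewrite Rabs_mult, (Rabs_right (exp _)) by (left; apply exp_pos).
  eapply Rle_trans. { apply Rmult_le_compat_r; [left; apply exp_pos| apply HBz; auto]. }
  rewrite Rmult_assoc. apply Rmult_le_compat_l; [nra|]. rewrite <- exp_plus.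
  right. f_equal. field.
Qed.

Lemma Ival_spec A c q tau : 0 <= A -> 0 < c -> 0 < tau -> Dom A q ->
  improper_integral_0_inf (Pint A c q tau) (Ival A c q tau).
Proof.
  intros HA Hc Ht HD. unfold Ival. apply epsilon_spec.
  destruct (Pint_bound A c q tau Hc Ht HD) as [K [HK Hb]].
  apply (imp_exists _ K (tau*c/2) A); auto. nra. apply Pint_cont, HD.
Qed.

Lemma w_le_exp nu w : 0 < nu -> 0 <= w -> w <= exp (nu * w) / nu.
Proof.
  intros Hn Hw. pose proof (exp_ineq1_le (nu*w)).
  apply (Rmult_le_reg_l nu); auto.
  replace (nu * (exp (nu * w) / nu)) with (exp (nu * w)) by (field; lra).
  lra.
Qed.

Lemma Dom_qw A c q : 0 <= A -> 0 < c -> Dom A q -> Dom A (qw A c q).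
Proof.
  intros HA Hc [Hq Hb]. split.
  - intro x. unfold qw. apply cont_mult; auto.
    apply (cont_ext (fun z => - (c * (A + z^2)))); [intro; reflexivity|].
    apply (cont_dl _ _ _ (derivable_pt_lim_opp (fun z => c * (A + z^2)) x _
      (dl_mult (fun _ => c) (fun z => A + z^2) x _ _ (dl_const c x)
         (dl_plus (fun _ => A) (fun z => z^2) x _ _ (dl_const A x) (derivable_pt_lim_pow x 2))))).
  - intros nu Hnu. destruct (Hb (nu/2) ltac:(lra)) as [B [HB HBz]].
    exists (B * c * (2/nu)). split. { apply Rmult_le_pos; [nra| left; apply Rdiv_lt_0_compat; lra]. }
    intros z Hz. unfold qw. rewrite Rabs_mult, Rabs_Ropp.
    assert (Hw : 0 <= A + z^2) by nra.
    rewrite (Rabs_right (c * _)) by nra.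
    pose proof (w_le_exp (nu/2) (A + z^2) ltac:(lra) Hw).
    apply Rle_trans with (B * z * exp (nu / 2 * (A + z ^ 2)) * (c * (exp (nu / 2 * (A + z ^ 2)) / (nu/2)))).
    { apply Rmult_le_compat; auto; try apply Rabs_pos; try nra. }
    right. replace (nu * (A + z^2)) with (nu/2 * (A + z^2) + nu/2 * (A + z^2)) by field.
    rewrite exp_plus. field. lra.
Qed.


Lemma exp_le x y : x <= y -> exp x <= exp y.
Proof. intros [H|H]; [left; apply exp_increasing; auto| subst; lra]. Qed.

Lemma R_pointwise A c q B nu tau tau0 z : 0 <= A -> 0 < c -> 0 < tau0 -> nu = tau0*c/8 -> 0 <= B ->
  (forall z, 0 <= z -> Rabs (q z) <= B * z * exp (nu * (A + z^2))) ->
  Rabs (tau - tau0) <= tau0/2 -> 0 <= z ->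
  Rabs ((Pint A c q tau z + -1 * Pint A c q tau0 z) + (-(tau - tau0)) * Pint A c (qw A c q) tau0 z)
   <= (tau-tau0)^2 * (B*c^2/nu^2) * z * exp (- (nu * (A + z^2))).
Proof.
  intros HA Hc Ht0 Hnu HB Hq Htau Hz.
  assert (Hnu0 : 0 < nu) by (subst; nra).
  set (w := A + z^2). assert (Hw : 0 <= w) by (unfold w; nra).
  set (x0 := tau0*c*w). set (u := (tau0 - tau)*c*w).
  assert (He : exp (- (tau * c * w)) = exp (- x0) * exp u).
  { rewrite <- exp_plus. f_equal. unfold x0, u. ring. }
  assert (Hexpr : (Pint A c q tau z + -1 * Pint A c q tau0 z) + (-(tau - tau0)) * Pint A c (qw A c q) tau0 z
          = q z * exp (- x0) * (exp u - 1 - u)).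
  { unfold Pint, qw. fold w. rewrite He. fold x0. unfold u. ring. }
  rewrite Hexpr. rewrite !Rabs_mult, (Rabs_right (exp (-x0))) by (left; apply exp_pos).
  assert (H1 := Hq z Hz). fold w in H1.
  assert (H2 := exp_taylor u).
  assert (H3 : exp (Rabs u) <= exp (4 * nu * w)).
  { apply exp_le. unfold u. rewrite Rabs_mult, (Rabs_right w) by lra.
    rewrite Rabs_mult, (Rabs_right c) by lra. rewrite Rabs_minus_sym.
    subst nu. apply Rmult_le_compat_r; auto. nra. }
  assert (Hwe := w_le_exp nu w Hnu0 Hw).
  assert (H4 : u^2 <= ((tau - tau0)*c)^2 * (exp (nu * w) / nu) * (exp (nu * w) / nu)).
  { replace (u^2) with (((tau - tau0)*c)^2 * w * w) by (unfold u; ring).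
    assert (0 <= ((tau - tau0)*c)^2) by (apply pow2_ge_0).
    apply Rmult_le_compat; [apply Rmult_le_pos; lra|lra| |lra]. apply Rmult_le_compat_l; lra. }
  assert (H5 : Rabs (exp u - 1 - u) <= ((tau - tau0)*c)^2 * (exp (nu * w) / nu) * (exp (nu * w) / nu) * exp (4 * nu * w)).
  { eapply Rle_trans; [apply H2|]. apply Rmult_le_compat; try nra; try (left; apply exp_pos). }
  apply Rle_trans with ((B * z * exp (nu * w)) * exp (-x0) *
     (((tau - tau0)*c)^2 * (exp (nu * w) / nu) * (exp (nu * w) / nu) * exp (4 * nu * w))).
  { apply Rmult_le_compat; try apply Rabs_pos.
    - apply Rmult_le_pos; [apply Rabs_pos|left; apply exp_pos].
    - apply Rmult_le_compat_r; [left; apply exp_pos|auto]. 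
    - auto. }
  assert (Hexp : exp (nu * w) * exp (- x0) * (exp (nu * w) * exp (nu * w)) * exp (4 * nu * w) = exp (- (nu * w))).
  { rewrite <- !exp_plus. f_equal. unfold x0. subst nu. field. }
  right. rewrite <- Hexp. unfold Rdiv. field. lra.
Qed.


Lemma Ival_deriv A c q tau0 : 0 <= A -> 0 < c -> 0 < tau0 -> Dom A q ->
  derivable_pt_lim (Ival A c q) tau0 (Ival A c (qw A c q) tau0).
Proof.
  intros HA Hc Ht0 HD.
  assert (HD' := Dom_qw A c q HA Hc HD).
  set (nu := tau0*c/8). assert (Hnu0: 0 < nu) by (unfold nu; nra).
  destruct (proj2 HD nu Hnu0) as [B [HB Hq]].
  set (C := (B*c^2/nu^2) / (2*nu)).
  assert (HK : 0 <= B*c^2/nu^2).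
  { unfold Rdiv. apply Rmult_le_pos; [nra|]. left. apply Rinv_0_lt_compat. nra. }
  assert (HC : 0 <= C).
  { unfold C. unfold Rdiv at 1. apply Rmult_le_pos; auto. left. apply Rinv_0_lt_compat. nra. }
  assert (key : forall tau, Rabs (tau - tau0) <= tau0/2 ->
     Rabs (Ival A c q tau - Ival A c q tau0 - (tau - tau0) * Ival A c (qw A c q) tau0) <= (tau-tau0)^2 * C).
  { intros tau Htau. assert (Htp : 0 < tau) by (assert (Hq1 := Rle_abs (-(tau-tau0))); rewrite Rabs_Ropp in Hq1; lra).
    pose proof (imp_lin _ _ _ _ (-1) (Ival_spec A c q tau HA Hc Htp HD) (Ival_spec A c q tau0 HA Hc Ht0 HD)) as H1.
    pose proof (imp_lin _ _ _ _ (-(tau - tau0)) H1 (Ival_spec A c (qw A c q) tau0 HA Hc Ht0 HD')) as H2.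
    replace (Ival A c q tau - Ival A c q tau0 - (tau - tau0) * Ival A c (qw A c q) tau0) with
      (Ival A c q tau + -1 * Ival A c q tau0 + -(tau - tau0) * Ival A c (qw A c q) tau0) by ring.
    apply (imp_abs_le _ _ _ H2). intros T pr HT.
    assert (Hcont : cont_all (fun x => (Pint A c q tau x + -1 * Pint A c q tau0 x) + -(tau - tau0) * Pint A c (qw A c q) tau0 x)).
    { intro x. apply (cont_plus (fun x => Pint A c q tau x + -1 * Pint A c q tau0 x) (fun x => -(tau-tau0) * Pint A c (qw A c q) tau0 x)).
      - apply (cont_plus (Pint A c q tau) (fun x => -1 * Pint A c q tau0 x)).
        + apply Pint_cont, HD.
        + apply (cont_mult (fun _ => -1) (Pint A c q tau0)); [apply cont_const| apply Pint_cont, HD].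
      - apply (cont_mult (fun _ => -(tau-tau0)) (Pint A c (qw A c q) tau0)); [apply cont_const| apply Pint_cont, HD']. }
    eapply Rle_trans.
    { apply (tail_bound _ ((tau-tau0)^2 * (B*c^2/nu^2)) nu A Hnu0); auto.
      - apply Rmult_le_pos; auto. apply pow2_ge_0.
      - intros z Hz. apply (R_pointwise A c q B nu tau tau0 z); auto.
      - lra. }
    unfold C. replace (0^2) with 0 by ring. rewrite Rplus_0_r.
    assert (exp (- (nu * A)) <= 1) by (rewrite <- exp_0; apply exp_le; nra).
    unfold Rdiv. rewrite !Rmult_assoc. apply Rmult_le_compat_l; [apply pow2_ge_0|].
    rewrite <- !Rmult_assoc. apply Rmult_le_compat_r; [left; apply Rinv_0_lt_compat; lra|].
    rewrite <- (Rmult_1_r (B * c ^ 2 * / nu ^ 2)) at 2.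
    apply Rmult_le_compat_l; auto. }
  intros eps He.
  assert (Hd : 0 < Rmin (tau0/2) (eps/(C+1))).
  { apply Rmin_pos; [lra| apply Rdiv_lt_0_compat; lra]. }
  exists (mkposreal _ Hd). intros h Hh0 Hh. simpl in Hh.
  pose proof (Rmin_l (tau0/2) (eps/(C+1))). pose proof (Rmin_r (tau0/2) (eps/(C+1))).
  specialize (key (tau0 + h) ltac:(replace (tau0 + h - tau0) with h by ring; lra)).
  replace (tau0 + h - tau0) with h in key by ring.
  replace ((Ival A c q (tau0 + h) - Ival A c q tau0) / h - Ival A c (qw A c q) tau0) with
    ((Ival A c q (tau0 + h) - Ival A c q tau0 - h * Ival A c (qw A c q) tau0) / h) by (field; auto).
  unfold Rdiv. rewrite Rabs_mult, Rabs_inv.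
  assert (Hhp : 0 < Rabs h) by (apply Rabs_pos_lt; auto).
  apply Rle_lt_trans with (h^2 * C * / Rabs h).
  { apply Rmult_le_compat_r; auto. left; apply Rinv_0_lt_compat; auto. }
  replace (h^2) with (Rabs h * Rabs h) by (rewrite <- Rabs_mult; rewrite Rabs_right; [ring| nra]).
  replace (Rabs h * Rabs h * C * / Rabs h) with (Rabs h * C) by (field; lra).
  assert (Rabs h * (C+1) < eps).
  { apply (Rmult_lt_reg_r (/ (C+1))); [apply Rinv_0_lt_compat; lra|].
    replace (Rabs h * (C + 1) * / (C + 1)) with (Rabs h) by (field; lra). lra. }
  nra.
Qed.


Lemma cont_eps f x0 e : continuity_pt f x0 -> 0 < e ->
  exists d, 0 < d /\ forall x, Rabs (x - x0) < d -> Rabs (f x - f x0) < e.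
Proof.
  intros Hc He. unfold continuity_pt, continue_in, limit1_in, limit_in in Hc.
  destruct (Hc e He) as [d [Hd H]]. exists d. split; auto. intros x Hx.
  destruct (Req_dec x x0) as [->|Hne].
  - replace (f x0 - f x0) with 0 by ring. rewrite Rabs_R0; auto.
  - apply (H x). split; [split; [exact Logic.I| auto]|]. simpl. unfold Rdist. auto.
Qed.

Lemma ri_lower f a b m (pr: Riemann_integrable f a b) : a <= b ->
  (forall x, a < x < b -> m <= f x) -> m*(b-a) <= RiemannInt pr.
Proof. intros Hab H. rewrite <- (RiemannInt_P15 (RiemannInt_P14 a b m)).
  apply RiemannInt_P19; auto. Qed.

Lemma imp_pos p L z0 : cont_all p -> (forall z, 0 <= z -> 0 <= p z) -> 0 < z0 -> 0 < p z0 ->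
  improper_integral_0_inf p L -> 0 < L.
Proof.
  intros Hc Hnn Hz0 Hp HL.
  destruct (cont_eps p z0 (p z0 / 2) (Hc z0) ltac:(lra)) as [d [Hd Hcx]].
  assert (Hd' : 0 < Rmin (d/2) (z0/2)) by (apply Rmin_pos; lra).
  pose proof (Rmin_l (d/2) (z0/2)). pose proof (Rmin_r (d/2) (z0/2)).
  set (d' := Rmin (d/2) (z0/2)) in *.
  set (a := z0 - d'). set (b := z0 + d').
  apply Rlt_le_trans with (p z0 / 2 * (b - a)).
  { unfold b, a. apply Rmult_lt_0_compat; lra. }
  apply (imp_ge p L _ b HL). intros T pr HT.
  rewrite (RiemannInt_P5 pr (ri p Hc 0 T)).
  rewrite <- (RiemannInt_P26 (ri p Hc 0 b) (ri p Hc b T) (ri p Hc 0 T)).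
  rewrite <- (RiemannInt_P26 (ri p Hc 0 a) (ri p Hc a b) (ri p Hc 0 b)).
  assert (H1 : 0 * (a - 0) <= RiemannInt (ri p Hc 0 a)).
  { apply ri_lower; [unfold a; lra|]. intros x Hx. apply Hnn; lra. }
  assert (H2 : 0 * (T - b) <= RiemannInt (ri p Hc b T)).
  { apply ri_lower; [lra|]. intros x Hx. apply Hnn; unfold b in *; lra. }
  assert (H3 : p z0 / 2 * (b - a) <= RiemannInt (ri p Hc a b)).
  { apply ri_lower; [unfold a, b; lra|]. intros x Hx.
    assert (Hxx : Rabs (x - z0) < d) by (apply Rabs_def1; unfold a, b in Hx; lra).
    specialize (Hcx x Hxx). apply Rabs_def2 in Hcx. lra. }
  lra.
Qed.


Lemma dl_sq f x l : derivable_pt_lim f x l -> derivable_pt_lim (fun t => (f t)^2) x (2 * f x * l).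
Proof. intro D.
  apply (dl_ext (fun t => (f t)^2) _ _ (INR 2 * (f x)^(Nat.pred 2) * l)); [intro; reflexivity| simpl; ring|].
  apply (dl_comp f (fun y => y^2)); auto. apply derivable_pt_lim_pow. Qed.
Lemma dl_ln f x l : derivable_pt_lim f x l -> 0 < f x -> derivable_pt_lim (fun t => ln (f t)) x (l / f x).
Proof. intros D H.
  apply (dl_ext (fun t => ln (f t)) _ _ (/ f x * l)); [intro; reflexivity| unfold Rdiv; ring|].
  apply (dl_comp f ln); auto. apply derivable_pt_lim_ln; auto. Qed.
Lemma dl_atan f x l : derivable_pt_lim f x l -> derivable_pt_lim (fun t => atan (f t)) x (l / (1 + (f x)^2)).
Proof. intros D.
  apply (dl_ext (fun t => atan (f t)) _ _ (/ (1 + (f x)^2) * l)); [intro; reflexivity| unfold Rdiv; ring|].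
  apply (dl_comp f atan); auto. apply derivable_pt_lim_atan. Qed.
Lemma dl_div f g x l1 l2 : derivable_pt_lim f x l1 -> derivable_pt_lim g x l2 -> g x <> 0 ->
  derivable_pt_lim (fun t => f t / g t) x ((l1 * g x - l2 * f x) / (g x)^2).
Proof. intros D1 D2 H.
  apply (dl_ext (f / g)%F _ _ ((l1 * g x - l2 * f x) / Rsqr (g x))); [intro; reflexivity| unfold Rsqr; simpl; field; auto|].
  apply derivable_pt_lim_div; auto. Qed.
Lemma dl_scal a f x l : derivable_pt_lim f x l -> derivable_pt_lim (fun t => a * f t) x (a * l).
Proof. intro D. apply (dl_ext (fun t => a * f t) _ _ (0 * f x + a * l)); [intro; reflexivity|ring|].
  apply (dl_mult (fun _ => a) f); auto. apply dl_const. Qed.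

Definition pf (g t : R) := g + zb g * t.
Definition Qf (g z t : R) := (pf g t)^2 + t^2 * z^2.
Definition PhiF (g z t : R) := z * ln (Qf g z t) / 2 - zb g * atan (t * z / pf g t).

Lemma pf_pos g t : 0 < g -> 0 <= t <= 1 -> 0 < pf g t.
Proof. intros Hg Ht. unfold pf, zb. nra. Qed.

Lemma Qf_pos g z t : 0 < g -> 0 <= t <= 1 -> 0 < Qf g z t.
Proof. intros Hg Ht. pose proof (pf_pos g t Hg Ht). unfold Qf. nra. Qed.

Lemma PhiF_deriv g z t : 0 < g -> 0 <= t <= 1 ->
  derivable_pt_lim (PhiF g z) t (z * t * (zb g ^ 2 + z^2) / Qf g z t).
Proof.
  intros Hg Ht. pose proof (pf_pos g t Hg Ht) as Hp. pose proof (Qf_pos g z t Hg Ht) as HQ.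
  assert (Dp : derivable_pt_lim (pf g) t (zb g)).
  { unfold pf. apply (dl_ext (fun t => g + zb g * t) _ _ (0 + zb g * 1)); [intro; reflexivity|ring|].
    apply (dl_plus (fun _ => g) (fun t => zb g * t)); [apply dl_const| apply dl_scal, dl_id]. }
  assert (DQ : derivable_pt_lim (Qf g z) t (2 * pf g t * zb g + (2 * t * 1 * z^2 + t^2 * 0))).
  { unfold Qf. apply (dl_plus (fun t => (pf g t)^2) (fun t => t^2 * z^2)).
    - apply (dl_sq (pf g)); auto.
    - apply (dl_mult (fun t => t^2) (fun _ => z^2)); [apply (dl_sq (fun t => t)), dl_id| apply dl_const]. }
  assert (DA : derivable_pt_lim (fun t => t * z / pf g t) t (((1 * z + t * 0) * pf g t - zb g * (t * z)) / (pf g t)^2)).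
  { apply (dl_div (fun t => t * z) (pf g)); auto; [|lra].
    apply (dl_mult (fun t => t) (fun _ => z)); [apply dl_id| apply dl_const]. }
  unfold PhiF.
  apply (dl_ext (fun t => z * ln (Qf g z t) / 2 - zb g * atan (t * z / pf g t)) _ _
     (z * ((2 * pf g t * zb g + (2 * t * 1 * z^2 + t^2 * 0)) / Qf g z t) / 2 -
      zb g * ((((1 * z + t * 0) * pf g t - zb g * (t * z)) / (pf g t)^2) / (1 + (t * z / pf g t)^2))));
    [intro; reflexivity| |].
  - assert (HQe : Qf g z t = (pf g t)^2 + t^2 * z^2) by reflexivity.
    assert (Hpe : pf g t - zb g * t = g) by (unfold pf; ring).
    replace (1 + (t * z / pf g t)^2) with (Qf g z t / (pf g t)^2) by (rewrite HQe; field; lra).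
    rewrite HQe in *. unfold pf in *. field. repeat split; lra.
  - apply (dl_minus (fun t => z * ln (Qf g z t) / 2) (fun t => zb g * atan (t * z / pf g t))).
    + apply (derivable_pt_lim_div_scal (fun t => z * ln (Qf g z t))).
      apply dl_scal. apply (dl_ln (Qf g z)); auto.
    + apply dl_scal. apply (dl_atan (fun t => t * z / pf g t)); auto.
Qed.


Lemma ln_sqrt' w : 0 < w -> ln (sqrt w) = ln w / 2.
Proof. intro Hw. assert (Hs : 0 < sqrt w) by (apply sqrt_lt_R0; auto).
  rewrite <- (sqrt_sqrt w) at 2 by lra. rewrite ln_mult by auto. field. Qed.

Lemma zb2_pos g z : 0 < z -> 0 < zb g ^ 2 + z^2.
Proof. intro. nra. Qed.

Lemma PhiF_diff g z : 0 < g -> 0 < z -> PhiF g z 1 - PhiF g z 0 = (zb g^2 + z^2) * f2star g z.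
Proof.
  intros Hg Hz.
  assert (H1 : pf g 1 = za g) by (unfold pf, za, zb; field).
  assert (H0 : pf g 0 = g) by (unfold pf; ring).
  assert (Ha : 0 < za g) by (unfold za; lra).
  assert (Hw : 0 < za g ^2 + z^2) by nra.
  assert (Hl1 : ln (/ g * sqrt (za g ^2 + z^2)) = - ln g + ln (za g ^2 + z^2) / 2).
  { rewrite ln_mult, ln_Rinv, ln_sqrt'; auto. apply Rinv_0_lt_compat; auto. apply sqrt_lt_R0; auto. }
  assert (Hl2 : ln (g^2) = 2 * ln g) by (rewrite ln_pow by auto; simpl; ring).
  unfold PhiF, Qf, f2star. rewrite H1, H0, Hl1.
  replace (pf g 0 ^ 2) with (g^2) by (rewrite H0; reflexivity).
  replace (0 ^ 2 * z ^ 2) with 0 by ring. rewrite Rplus_0_r, Hl2.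
  replace (0 * z / g) with 0 by (field; lra). rewrite atan_0.
  replace (1 * z) with z by ring. replace (1^2) with 1 by ring. rewrite Rmult_1_l.
  field. pose proof (zb2_pos g z Hz). lra.
Qed.

Lemma f2_mvt g z : 0 < g -> 0 < z -> exists t, 0 < t < 1 /\ f2star g z = z * t / Qf g z t.
Proof.
  intros Hg Hz.
  destruct (MVT_cor2 (PhiF g z) (fun t => z * t * (zb g ^ 2 + z^2) / Qf g z t) 0 1 ltac:(lra)
     (fun c Hc => PhiF_deriv g z c Hg Hc)) as [t [Ht Htt]].
  exists t. split; auto. rewrite PhiF_diff in Ht by auto.
  pose proof (zb2_pos g z Hz). pose proof (Qf_pos g z t Hg ltac:(lra)).
  apply (Rmult_eq_reg_l (zb g ^ 2 + z ^ 2)); [|lra]. rewrite Ht. field. lra.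
Qed.

Lemma f2_pos g z : 0 < g -> 0 < z -> 0 < f2star g z.
Proof.
  intros Hg Hz. destruct (f2_mvt g z Hg Hz) as [t [Ht ->]].
  pose proof (Qf_pos g z t Hg ltac:(lra)). apply Rdiv_lt_0_compat; nra.
Qed.

Lemma f2_small g z : 0 < g -> 0 < z -> f2star g z < z / (Rmin g (1/2))^2.
Proof.
  intros Hg Hz. destruct (f2_mvt g z Hg Hz) as [t [Ht ->]].
  set (m := Rmin g (1/2)).
  assert (Hm : 0 < m) by (apply Rmin_pos; lra).
  pose proof (Rmin_l g (1/2)). pose proof (Rmin_r g (1/2)). fold m in H, H0.
  assert (Hp : m <= pf g t) by (unfold pf, zb; nra).
  assert (HQ : m^2 <= Qf g z t) by (unfold Qf; nra).
  assert (HQp : 0 < Qf g z t) by (apply Qf_pos; lra).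
  apply Rle_lt_trans with (z * t / m^2).
  - unfold Rdiv. apply Rmult_le_compat_l; [nra|]. apply Rinv_le_contravar; nra.
  - unfold Rdiv. apply Rmult_lt_compat_r; [apply Rinv_0_lt_compat; nra| nra].
Qed.

Lemma f2_mono g1 g2 z : 0 < g1 <= g2 -> 0 < z -> f2star g2 z <= f2star g1 z.
Proof.
  intros Hg Hz.
  set (D1 := zb g1 ^2 + z^2). set (D2 := zb g2 ^2 + z^2).
  assert (HD1 : 0 < D1) by (apply zb2_pos; auto). assert (HD2 : 0 < D2) by (apply zb2_pos; auto).
  set (Psi := fun t => PhiF g1 z t / D1 - PhiF g2 z t / D2).
  assert (Hd : forall t, 0 <= t <= 1 -> derivable_pt_lim Psi t (z * t / Qf g1 z t - z * t / Qf g2 z t)).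
  { intros t Ht. pose proof (Qf_pos g1 z t ltac:(lra) Ht). pose proof (Qf_pos g2 z t ltac:(lra) Ht).
    apply (dl_ext Psi _ _ (z * t * D1 / Qf g1 z t / D1 - z * t * D2 / Qf g2 z t / D2));
      [intro; reflexivity| field; repeat split; lra |].
    unfold Psi. apply (dl_minus (fun t => PhiF g1 z t / D1) (fun t => PhiF g2 z t / D2)).
    - apply (derivable_pt_lim_div_scal (PhiF g1 z)). apply PhiF_deriv; lra.
    - apply (derivable_pt_lim_div_scal (PhiF g2 z)). apply PhiF_deriv; lra. }
  destruct (MVT_cor2 Psi _ 0 1 ltac:(lra) Hd) as [t [Ht Htt]].
  assert (HPsi : Psi 1 - Psi 0 = f2star g1 z - f2star g2 z).
  { unfold Psi. replace (PhiF g1 z 1 / D1 - PhiF g2 z 1 / D2 - (PhiF g1 z 0 / D1 - PhiF g2 z 0 / D2))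
      with ((PhiF g1 z 1 - PhiF g1 z 0) / D1 - (PhiF g2 z 1 - PhiF g2 z 0) / D2) by (field; lra).
    rewrite !PhiF_diff by lra. fold D1 D2. field. lra. }
  assert (0 <= z * t / Qf g1 z t - z * t / Qf g2 z t).
  { pose proof (Qf_pos g1 z t ltac:(lra) ltac:(lra)).
    assert (Hp1 : 0 < pf g1 t) by (apply pf_pos; lra).
    assert (Hpp : pf g1 t <= pf g2 t) by (unfold pf, zb; nra).
    assert (Qf g1 z t <= Qf g2 z t) by (unfold Qf; nra).
    assert (/ Qf g2 z t <= / Qf g1 z t) by (apply Rinv_le_contravar; lra).
    unfold Rdiv. assert (0 <= z*t) by nra. nra. }
  nra.
Qed.


Lemma cont_inv f x : continuity_pt f x -> f x <> 0 -> continuity_pt (fun y => / f y) x.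
Proof. intros; apply (continuity_pt_inv f); auto. Qed.
Lemma cont_ln f x : continuity_pt f x -> 0 < f x -> continuity_pt (fun y => ln (f y)) x.
Proof. intros H Hp. apply cont_comp; auto. apply (cont_dl _ _ _ (derivable_pt_lim_ln _ Hp)). Qed.
Lemma cont_sqrt f x : continuity_pt f x -> 0 <= f x -> continuity_pt (fun y => sqrt (f y)) x.
Proof. intros H Hp. apply cont_comp; auto. apply continuity_pt_sqrt; auto. Qed.
Lemma cont_atan f x : continuity_pt f x -> continuity_pt (fun y => atan (f y)) x.
Proof. intros H. apply cont_comp; auto. apply (cont_dl _ _ _ (derivable_pt_lim_atan _)). Qed.
Lemma cont_exp f x : continuity_pt f x -> continuity_pt (fun y => exp (f y)) x.
Proof. intros H. apply cont_comp; auto. apply (cont_dl _ _ _ (derivable_pt_lim_exp _)). Qed.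
Lemma cont_sin f x : continuity_pt f x -> continuity_pt (fun y => sin (f y)) x.
Proof. intros H. apply cont_comp; auto. apply continuity_sin. Qed.
Lemma cont_sq x : continuity_pt (fun y => y^2) x.
Proof. apply (cont_dl _ _ _ (derivable_pt_lim_pow x 2)). Qed.
Lemma cont_opp f x : continuity_pt f x -> continuity_pt (fun y => - f y) x.
Proof. intros; apply (continuity_pt_opp f); auto. Qed.

Lemma cont_at_bound f C : (forall z, Rabs (f z) <= C * Rabs z) -> f 0 = 0 -> continuity_pt f 0.
Proof.
  intros Hb H0. unfold continuity_pt, continue_in, limit1_in, limit_in. intros eps He.
  assert (HC : 0 <= C) by (specialize (Hb 1); rewrite Rabs_R1 in Hb; pose proof (Rabs_pos (f 1)); lra).
  exists (eps / (C+1)). split; [apply Rdiv_lt_0_compat; lra|].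
  intros x [_ Hx]. simpl in *. unfold Rdist in *. rewrite H0. replace (f x - 0) with (f x) by ring.
  replace (x - 0) with x in Hx by ring.
  eapply Rle_lt_trans; [apply Hb|].
  assert (Rabs x * (C+1) < eps).
  { apply (Rmult_lt_reg_r (/ (C+1))); [apply Rinv_0_lt_compat; lra|].
    replace (Rabs x * (C + 1) * / (C + 1)) with (Rabs x) by (field; lra). exact Hx. }
  pose proof (Rabs_pos x). nra.
Qed.

Lemma atan_sign z a : 0 < a -> 0 <= z * atan (z / a).
Proof.
  intro Ha. assert (Hia : 0 < / a) by (apply Rinv_0_lt_compat; auto). unfold Rdiv.
  destruct (Rtotal_order z 0) as [H|[H|H]].
  - assert (atan (z * / a) < atan 0) by (apply atan_increasing; nra). rewrite atan_0 in H0. nra.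
  - subst. lra.
  - assert (atan 0 < atan (z * / a)) by (apply atan_increasing; nra). rewrite atan_0 in H0. nra.
Qed.

Lemma sqrt_w_bound a z : 0 < a -> sqrt (a^2 + z^2) <= a + Rabs z.
Proof.
  intro Ha. rewrite <- (sqrt_pow2 (a + Rabs z)) by (pose proof (Rabs_pos z); lra).
  apply sqrt_le_1_alt. pose proof (Rabs_pos z).
  assert (z^2 = Rabs z ^2) by (rewrite pow2_abs; ring). nra.
Qed.

Lemma f1_lower g : 0 < g -> exists K, forall z, - K <= f1star g z.
Proof.
  intro Hg. set (a := za g). set (b := zb g).
  assert (Ha : 0 < a) by (unfold a, za; lra).
  assert (Hab : a = g + b) by (unfold a, b, za, zb; field).
  destruct (Rle_dec 0 b) as [Hb|Hb].
  - exists 0. intro z. unfold f1star. fold a b.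
    assert (Hy : 1 <= / g * sqrt (a^2 + z^2)).
    { assert (a <= sqrt (a^2 + z^2)).
      { rewrite <- (sqrt_pow2 a) at 1 by lra. apply sqrt_le_1_alt. nra. }
      apply (Rmult_le_reg_l g); auto. rewrite <- Rmult_assoc, Rinv_r, Rmult_1_l by lra. lra. }
    assert (Hln : 0 <= ln (/ g * sqrt (a^2 + z^2))).
    { rewrite <- ln_1. destruct Hy as [Hy|Hy]; [left; apply ln_increasing; lra| rewrite Hy; lra]. }
    pose proof (atan_sign z a Ha).
    destruct (Req_dec (b^2 + z^2) 0) as [HD|HD].
    + assert (Hb0 : b = 0) by nra. assert (Hz0 : z = 0) by nra. rewrite Hb0, Hz0.
      replace (0 * ln (/ g * sqrt (a ^ 2 + 0 ^ 2)) + 0 * atan (0 / a)) with 0 by ring. lra.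
    + assert (0 < b^2 + z^2) by nra. rewrite Ropp_0.
      apply Rmult_le_pos; [left; apply Rinv_0_lt_compat; auto|]. nra.
  - set (nb := - b). assert (Hnb : 0 < nb) by (unfold nb; lra).
    exists ((a / nb + 1/2) / g). intro z. unfold f1star. fold a b.
    assert (HD : nb^2 <= b^2 + z^2) by (unfold nb; nra).
    set (y := / g * sqrt (a^2 + z^2)).
    assert (Hy0 : 0 < y).
    { unfold y. apply Rmult_lt_0_compat; [apply Rinv_0_lt_compat; auto| apply sqrt_lt_R0; nra]. }
    assert (Hly : ln y <= y) by (pose proof (exp_ineq1_le (ln y)); rewrite exp_ln in H; lra).
    assert (Hyb : y <= (a + Rabs z) / g).
    { unfold y. rewrite Rmult_comm. unfold Rdiv. apply Rmult_le_compat_r; [left; apply Rinv_0_lt_compat; auto|].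
      apply sqrt_w_bound; auto. }
    pose proof (atan_sign z a Ha).
    assert (Hnum : - (nb * y) <= b * ln y + z * atan (z / a)) by (unfold nb; nra).
    assert (HDp : 0 < b^2 + z^2) by nra.
    assert (Hz2 : nb * Rabs z <= (b^2 + z^2) / 2).
    { assert (E1 : z^2 = Rabs z ^2) by (rewrite pow2_abs; ring).
      assert (E2 : b^2 = nb^2) by (unfold nb; ring). rewrite E1, E2.
      pose proof (pow2_ge_0 (nb - Rabs z)). lra. }
    assert (Hkey : nb * y <= (a / nb + 1/2) / g * (b^2 + z^2)).
    { apply Rle_trans with (nb * ((a + Rabs z) / g)); [apply Rmult_le_compat_l; lra|].
      assert (X1 : a * nb <= a / nb * (b^2 + z^2)).
      { replace (a * nb) with (a / nb * nb^2) by (field; lra).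
        apply Rmult_le_compat_l; auto. left. apply Rdiv_lt_0_compat; lra. }
      assert (X : nb * (a + Rabs z) <= (a / nb + 1/2) * (b^2 + z^2)).
      { replace ((a / nb + 1/2) * (b^2 + z^2)) with (a / nb * (b^2 + z^2) + (b^2 + z^2)/2) by (field; lra). lra. }
      replace (nb * ((a + Rabs z) / g)) with (/ g * (nb * (a + Rabs z))) by (field; lra).
      replace ((a / nb + 1 / 2) / g * (b ^ 2 + z ^ 2)) with (/ g * ((a / nb + 1/2) * (b^2 + z^2))) by (field; lra).
      apply Rmult_le_compat_l; [left; apply Rinv_0_lt_compat; auto| exact X].
    }
    apply (Rmult_le_reg_l (b^2 + z^2)); auto.
    rewrite <- Rmult_assoc, Rinv_r, Rmult_1_l by lra. nra.
Qed.


Definition hz (g z : R) := z / (za g ^ 2 + z ^ 2) * exp (- f1star g z) * sin (f2star g z).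

Lemma za_pos g : 0 < g -> 0 < za g.
Proof. unfold za; lra. Qed.

Lemma cont_lnpart g z : 0 < g -> continuity_pt (fun z => ln (/ g * sqrt (za g ^ 2 + z ^ 2))) z.
Proof.
  intro Hg. pose proof (za_pos g Hg).
  apply (cont_ln (fun z => / g * sqrt (za g ^ 2 + z ^ 2))).
  - apply (cont_mult (fun _ => / g) (fun z => sqrt (za g ^ 2 + z ^ 2))); [apply cont_const|].
    apply (cont_sqrt (fun z => za g ^ 2 + z ^ 2)); [|nra].
    apply (cont_plus (fun _ => za g ^ 2) (fun z => z^2)); [apply cont_const|apply cont_sq].
  - apply Rmult_lt_0_compat; [apply Rinv_0_lt_compat; auto| apply sqrt_lt_R0; nra].
Qed.

Lemma cont_atanpart g z : continuity_pt (fun z => atan (z / za g)) z.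
Proof.
  apply (cont_atan (fun z => z / za g)).
  apply (cont_mult (fun z => z) (fun _ => / za g)); [apply cont_id|apply cont_const].
Qed.

Lemma cont_invD g z : zb g ^ 2 + z ^ 2 <> 0 -> continuity_pt (fun z => / (zb g ^ 2 + z ^ 2)) z.
Proof.
  intro H. apply (cont_inv (fun z => zb g ^ 2 + z ^ 2)); auto.
  apply (cont_plus (fun _ => zb g ^ 2) (fun z => z^2)); [apply cont_const|apply cont_sq].
Qed.

Lemma cont_f1 g z : 0 < g -> zb g ^ 2 + z ^ 2 <> 0 -> continuity_pt (f1star g) z.
Proof.
  intros Hg HD. unfold f1star.
  apply (cont_mult (fun z => / (zb g ^ 2 + z ^ 2)) (fun z => zb g * ln (/ g * sqrt (za g ^ 2 + z ^ 2)) + z * atan (z / za g))).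
  - apply cont_invD; auto.
  - apply (cont_plus (fun z => zb g * ln (/ g * sqrt (za g ^ 2 + z ^ 2))) (fun z => z * atan (z / za g))).
    + apply (cont_mult (fun _ => zb g) (fun z => ln (/ g * sqrt (za g ^ 2 + z ^ 2)))); [apply cont_const|apply cont_lnpart; auto].
    + apply (cont_mult (fun z => z) (fun z => atan (z / za g))); [apply cont_id|apply cont_atanpart].
Qed.

Lemma cont_f2 g z : 0 < g -> zb g ^ 2 + z ^ 2 <> 0 -> continuity_pt (f2star g) z.
Proof.
  intros Hg HD. unfold f2star.
  apply (cont_mult (fun z => / (zb g ^ 2 + z ^ 2)) (fun z => z * ln (/ g * sqrt (za g ^ 2 + z ^ 2)) - zb g * atan (z / za g))).
  - apply cont_invD; auto.
  - apply (cont_minus (fun z => z * ln (/ g * sqrt (za g ^ 2 + z ^ 2))) (fun z => zb g * atan (z / za g))).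
    + apply (cont_mult (fun z => z) (fun z => ln (/ g * sqrt (za g ^ 2 + z ^ 2)))); [apply cont_id|apply cont_lnpart; auto].
    + apply (cont_mult (fun _ => zb g) (fun z => atan (z / za g))); [apply cont_const|apply cont_atanpart].
Qed.

Lemma hz_bound g : 0 < g -> exists C, 0 <= C /\ forall z, Rabs (hz g z) <= C * Rabs z.
Proof.
  intro Hg. destruct (f1_lower g Hg) as [K HK]. pose proof (za_pos g Hg) as Ha.
  assert (HA : 0 < za g ^ 2) by nra.
  exists (exp K / za g ^ 2). split; [left; apply Rdiv_lt_0_compat; [apply exp_pos|auto]|].
  intro z. unfold hz. rewrite !Rabs_mult.
  assert (Hw : za g ^ 2 <= za g ^ 2 + z ^ 2) by nra.
  assert (H1 : Rabs (z / (za g ^ 2 + z ^ 2)) <= Rabs z / za g ^ 2).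
  { unfold Rdiv. rewrite Rabs_mult, Rabs_inv, (Rabs_right (za g ^ 2 + z^2)) by nra.
    apply Rmult_le_compat_l; [apply Rabs_pos|]. apply Rinv_le_contravar; auto. }
  assert (H2 : Rabs (exp (- f1star g z)) <= exp K).
  { rewrite Rabs_right by (left; apply exp_pos). apply exp_le. specialize (HK z). lra. }
  assert (H3 : Rabs (sin (f2star g z)) <= 1) by (pose proof (SIN_bound (f2star g z)); apply Rabs_le; lra).
  apply Rle_trans with (Rabs z / za g ^ 2 * exp K * 1).
  - apply Rmult_le_compat; try apply Rabs_pos; auto.
    + apply Rmult_le_pos; apply Rabs_pos.
    + apply Rmult_le_compat; try apply Rabs_pos; auto.
  - right. field. lra.
Qed.

Lemma hz_cont g : 0 < g -> cont_all (hz g).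
Proof.
  intros Hg z. destruct (Req_dec z 0) as [->|Hz].
  - destruct (hz_bound g Hg) as [C [_ HC]]. apply (cont_at_bound _ C HC).
    unfold hz. unfold Rdiv. ring.
  - assert (HD : zb g ^ 2 + z ^ 2 <> 0) by (intro; apply Hz; nra).
    pose proof (za_pos g Hg).
    unfold hz.
    apply (cont_mult (fun z => z / (za g ^ 2 + z ^ 2) * exp (- f1star g z)) (fun z => sin (f2star g z))).
    + apply (cont_mult (fun z => z / (za g ^ 2 + z ^ 2)) (fun z => exp (- f1star g z))).
      * apply (cont_mult (fun z => z) (fun z => / (za g ^ 2 + z ^ 2))); [apply cont_id|].
        apply (cont_inv (fun z => za g ^ 2 + z ^ 2)); [|nra].
        apply (cont_plus (fun _ => za g ^ 2) (fun z => z^2)); [apply cont_const|apply cont_sq].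
      * apply (cont_exp (fun z => - f1star g z)). apply (cont_opp (f1star g)). apply cont_f1; auto.
    + apply (cont_sin (f2star g)). apply cont_f2; auto.
Qed.

Lemma hz_Dom g : 0 < g -> Dom (za g ^ 2) (hz g).
Proof.
  intro Hg. split; [apply hz_cont; auto|].
  intros nu Hnu. destruct (hz_bound g Hg) as [C [HC Hb]]. exists C. split; auto.
  intros z Hz. eapply Rle_trans; [apply Hb|]. rewrite Rabs_right by lra.
  assert (1 <= exp (nu * (za g ^ 2 + z ^ 2))) by (rewrite <- exp_0; apply exp_le; pose proof (za_pos g Hg); nra).
  rewrite <- (Rmult_1_r (C * z)) at 1. apply Rmult_le_compat_l; auto. nra.
Qed.


Lemma dl_local f g x l : derivable_pt_lim f x l ->
  (exists d, 0 < d /\ forall y, Rabs (y - x) < d -> g y = f y) -> derivable_pt_lim g x l.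
Proof.
  intros D [d [Hd Heq]] e He. destruct (D e He) as [d1 Hd1].
  assert (Hm : 0 < Rmin d d1) by (apply Rmin_pos; [lra| apply cond_pos]).
  exists (mkposreal _ Hm). intros h Hh0 Hh. simpl in Hh.
  pose proof (Rmin_l d d1). pose proof (Rmin_r d d1).
  rewrite (Heq (x + h)), (Heq x).
  - apply Hd1; auto. lra.
  - replace (x - x) with 0 by ring. rewrite Rabs_R0; lra.
  - replace (x + h - x) with h by ring. lra.
Qed.

Theorem mainTheorem3 (E r sigma g0 : R) :
  0 < E -> 0 < r -> 0 < sigma ->
  is_gamma0 g0 ->
  g0 <= 2 * r / sigma ^ 2 ->
  let g := 2 * r / sigma ^ 2 in
  (forall z, 0 < z -> 0 <= f2star g z <= PI) /\
  (forall tau, 0 < tau -> exists L,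
      improper_integral_0_inf (zhu_integrand sigma g tau) L) /\
  (forall rho : R -> R, is_rho_zhu E sigma g rho ->
     exists d1 d2 : R -> R,
       (forall tau, 0 < tau -> derivable_pt_lim rho tau (d1 tau)) /\
       (forall tau, 0 < tau -> derivable_pt_lim d1 tau (d2 tau)) /\
       (forall tau, 0 < tau -> 0 < d2 tau)).
Proof.
  intros HE Hr Hs [Hg0 [Hg0pi Hg0min]] Hle g.
  assert (Hs2 : 0 < sigma ^ 2) by nra.
  assert (Hg : 0 < g) by (unfold g; apply Rdiv_lt_0_compat; lra).
  set (A := za g ^ 2). set (c := sigma^2/2).
  assert (HA : 0 <= A) by (unfold A; pose proof (za_pos g Hg); nra).
  assert (Hc : 0 < c) by (unfold c; lra).
  assert (Hzhu : forall tau, zhu_integrand sigma g tau = Pint A c (hz g) tau).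
  { intro tau. apply functional_extensionality. intro z. unfold zhu_integrand, Pint, hz, A, c. unfold Rdiv. ring. }
  assert (HD := hz_Dom g Hg). fold A in HD.
  assert (HD1 := Dom_qw A c _ HA Hc HD). assert (HD2 := Dom_qw A c _ HA Hc HD1).
  assert (Part1 : forall z, 0 < z -> 0 <= f2star g z <= PI).
  { intros z Hz. split; [left; apply f2_pos; auto|].
    eapply Rle_trans; [apply (f2_mono g0 g z); auto; lra| apply Hg0pi; auto]. }
  split; [exact Part1| split].
  - intros tau Ht. exists (Ival A c (hz g) tau). rewrite Hzhu. apply Ival_spec; auto.
  - intros rho Hrho.
    set (K1 := 2 * E / PI).
    assert (HK1 : 0 < K1) by (unfold K1; apply Rdiv_lt_0_compat; [lra| apply PI_RGT_0]).
    exists (fun tau => K1 * Ival A c (qw A c (hz g)) tau), (fun tau => K1 * Ival A c (qw A c (qw A c (hz g))) tau).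
    split; [|split].
    + intros tau Ht.
      apply (dl_local (fun t => g * E / (1 + g) + K1 * Ival A c (hz g) t)).
      * apply (dl_ext (fun t => g * E / (1 + g) + K1 * Ival A c (hz g) t) _ _ (0 + K1 * Ival A c (qw A c (hz g)) tau));
          [intro; reflexivity| ring|].
        apply (dl_plus (fun _ => g * E / (1 + g)) (fun t => K1 * Ival A c (hz g) t)); [apply dl_const|].
        apply dl_scal. apply Ival_deriv; auto.
      * exists tau. split; auto. intros y Hy.
        assert (Hyp : 0 < y) by (apply Rabs_def2 in Hy; lra).
        destruct (Hrho y Hyp) as [L [HL Hry]]. rewrite Hry. unfold K1. f_equal. f_equal.
        rewrite Hzhu in HL. apply (imp_unique _ _ _ HL). apply Ival_spec; auto.
    + intros tau Ht. apply dl_scal. apply Ival_deriv; auto.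
    + intros tau Ht. apply Rmult_lt_0_compat; auto.
      set (m := Rmin g (1/2)).
      assert (Hm : 0 < m) by (apply Rmin_pos; lra).
      set (z0 := m^2 * PI / 2).
      assert (Hz0 : 0 < z0) by (unfold z0; pose proof PI_RGT_0; apply Rdiv_lt_0_compat; [apply Rmult_lt_0_compat; [apply pow_lt|]|]; lra).
      assert (Hf0 : 0 < f2star g z0 < PI).
      { split; [apply f2_pos; auto|]. eapply Rlt_le_trans; [apply f2_small; auto|].
        fold m. unfold z0. replace (m ^ 2 * PI / 2 / m ^ 2) with (PI/2) by (field; lra).
        pose proof PI_RGT_0. lra. }
      assert (Hhnn : forall z, 0 <= z -> 0 <= hz g z).
      { intros z Hz. destruct (Req_dec z 0) as [->|Hne].
        - unfold hz. unfold Rdiv. rewrite !Rmult_0_l. lra.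
        - assert (Hzp : 0 < z) by lra. pose proof (Part1 z Hzp).
          unfold hz. apply Rmult_le_pos; [apply Rmult_le_pos|].
          + apply Rmult_le_pos; [lra|]. left. apply Rinv_0_lt_compat. pose proof (za_pos g Hg). nra.
          + left; apply exp_pos.
          + apply sin_ge_0; lra. }
      assert (Hhpos : 0 < hz g z0).
      { unfold hz. apply Rmult_lt_0_compat; [apply Rmult_lt_0_compat|].
        - apply Rmult_lt_0_compat; [lra|]. apply Rinv_0_lt_compat. pose proof (za_pos g Hg). nra.
        - apply exp_pos.
        - apply sin_gt_0; lra. }
      assert (Hform : forall z, Pint A c (qw A c (qw A c (hz g))) tau z =
          hz g z * (c * (A + z^2))^2 * exp (-(tau*c*(A+z^2)))) by (intro; unfold Pint, qw; ring).
      apply (imp_pos (Pint A c (qw A c (qw A c (hz g))) tau) _ z0).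
      * apply Pint_cont, HD2.
      * intros z Hz. rewrite Hform. apply Rmult_le_pos; [apply Rmult_le_pos; [apply Hhnn; auto| apply pow2_ge_0]| left; apply exp_pos].
      * exact Hz0.
      * rewrite Hform. apply Rmult_lt_0_compat; [apply Rmult_lt_0_compat; [exact Hhpos|]| apply exp_pos].
        assert (0 < c * (A + z0^2)) by (apply Rmult_lt_0_compat; nra). nra.
      * apply Ival_spec; auto.
Qed.
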